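(* Let $G$ be a scheduling game on two related machines $M_1,M_2$ with speeds $s_1=1$ and $s_2=s\le 1$ and arbitrary priority lists $\pi_1,\pi_2$, in which either all jobs have positive deterioration, or all jobs have negative deterioration and are delay-averse (i.e. $a_i\le 1$ for all $i$). Run the following algorithm: first assign all jobs to $M_1$; then for $k=1,\dots,n$, the job $i$ with $\pi_2(i)=k$ performs a best-response move with respect to the current profile, i.e. it moves to $M_2$ if and only if this strictly decreases its completion time. Then the resulting profile is a pure Nash equilibrium of $G$.
   Context: Scheduling game: a finite set $N$ of $n\ge1$ jobs (players) and a set $M$ of machines. Machine $j$ has speed $s_j>0$ and a priority list $\pi_j$, a bijection $N\to\{1,\dots,n\}$; job $u$ has higher priority than $v$ on $j$ iff $\pi_j(u)<\pi_j(v)$. Each job $i$ has a processing-time function $p_i$: with positive deterioration $p_i(t)=b_i+a_it$ ($b_i,a_i\ge0$), with negative deterioration $p_i(t)=\max\{\tau_i,b_i-a_it\}$ ($b_i,a_i\ge0$, $\tau_i>0$). A profile $\sigma\in M^N$ assigns each job to a machine. On machine $j$, the jobs assigned to it, listed in increasing $\pi_j$-order as $i_1,i_2,\dots$, are processed without idle time: $S_{i_1}(\sigma)=0$, $C_{i_k}(\sigma)=S_{i_k}(\sigma)+p_{i_k}(S_{i_k}(\sigma))/s_j$, $S_{i_{k+1}}(\sigma)=C_{i_k}(\sigma)$. The cost of job $i$ is $C_i(\sigma)$. A pure Nash equilibrium (NE) is a profile in which no job can strictly decrease its completion time by unilaterally changing its machine. A job is delay-averse if it has positive deterioration, or negative deterioration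 with $a_i\le \max_j s_j$. *)

(* Defs.v *)
From mathcomp Require Import all_boot all_order all_algebra all_fingroup.
Set Implicit Arguments. Unset Strict Implicit. Unset Printing Implicit Defensive.
Import Order.TTheory GRing.Theory Num.Theory.
Local Open Scope ring_scope.

Section Sched.
Variable R : realFieldType.
Variable n : nat.
Variable M : finType.

(* Processing time of job i started at time t.
   pos = true  : positive deterioration  p_i(t) = b_i + a_i t
   pos = false : negative deterioration  p_i(t) = max(tau_i, b_i - a_i t) *)
Definition proc (pos : bool) (a b tau : 'I_n -> R) (i : 'I_n) (t : R) : R :=
  if pos then b i + a i * t else Num.max (tau i) (b i - a i * t).

(* Jobs of machine j under profile sigma, listed in increasing pi_j order
   (prio j maps a job to its 0-based position on the priority list). *)
Definition jobs_on (prio : M -> {perm 'I_n}) (sigma : 'I_n -> M) (j : M)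
  : seq 'I_n :=
  [seq i <- [seq ((prio j)^-1)%g k | k <- enum 'I_n] | sigma i == j].

Fixpoint compl (f : 'I_n -> R -> R) (t : R) (l : seq 'I_n) (i : 'I_n) : R :=
  match l with
  | [::] => t
  | u :: l' => let c := t + f u t in if u == i then c else compl f c l' i
  end.

Definition cost (speed : M -> R) (prio : M -> {perm 'I_n}) (p : 'I_n -> R -> R)
  (sigma : 'I_n -> M) (i : 'I_n) : R :=
  compl (fun u t => p u t / speed (sigma i)) 0 (jobs_on prio sigma (sigma i)) i.

Definition upd (sigma : 'I_n -> M) (i : 'I_n) (m : M) : 'I_n -> M :=
  fun k => if k == i then m else sigma k.

Definition is_NE (speed : M -> R) (prio : M -> {perm 'I_n}) (p : 'I_n -> R -> R)
  (sigma : 'I_n -> M) : Prop :=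
  forall (i : 'I_n) (m : M),
    cost speed prio p sigma i <= cost speed prio p (upd sigma i m) i.
End Sched.

(* Two machines: false = M_1 (speed 1), true = M_2 (speed s). *)
Definition speed2 {R : realFieldType} (s : R) (m : bool) : R := if m then s else 1.
Definition prio2 {n} (pi1 pi2 : {perm 'I_n}) (m : bool) : {perm 'I_n} :=
  if m then pi2 else pi1.

Definition alg_step {R : realFieldType} {n} (s : R) (pi1 pi2 : {perm 'I_n})
  (p : 'I_n -> R -> R) (sigma : 'I_n -> bool) (k : 'I_n) : 'I_n -> bool :=
  let i := (pi2^-1)%g k in
  if cost (speed2 s) (prio2 pi1 pi2) p (upd sigma i true) i
       < cost (speed2 s) (prio2 pi1 pi2) p sigma i
  then upd sigma i true else sigma.

Definition alg_result {R : realFieldType} {n} (s : R) (pi1 pi2 : {perm 'I_n})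
  (p : 'I_n -> R -> R) : 'I_n -> bool :=
  foldl (alg_step s pi1 pi2 p) (fun _ => false) (enum 'I_n).

(* Main.v *)
Require Import Defs.
From mathcomp Require Import all_boot all_order all_algebra all_fingroup.
From mathcomp Require Import ring lra.
Import Order.TTheory GRing.Theory Num.Theory.
Local Open Scope ring_scope.

Fixpoint st {R : realFieldType} {n} (f : 'I_n -> R -> R) (t : R) (l : seq 'I_n) (i : 'I_n) : R :=
  match l with [::] => t | u :: l' => if u == i then t else st f (t + f u t) l' i end.

Lemma st_ge (R : realFieldType) n (f : 'I_n -> R -> R)
  (hf : forall u t, 0 <= t -> 0 <= f u t) l i t : 0 <= t -> t <= st f t l i.
Proof.
elim: l t => [|u l IH] t ht //=. case: ifP => _ //.
apply: le_trans (IH _ _); first by rewrite lerDl hf.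
by rewrite addr_ge0 // hf.
Qed.

Lemma compl_st (R : realFieldType) n (f : 'I_n -> R -> R) l i t :
  i \in l -> compl f t l i = st f t l i + f i (st f t l i).
Proof.
elim: l t => [|u l IH] t //=. rewrite in_cons.
case: (eqVneq u i) => [->|ne] //= H; apply: IH; by move: H.
Qed.

Lemma compl_ge_st (R : realFieldType) n (f : 'I_n -> R -> R)
  (hf : forall u t, 0 <= t -> 0 <= f u t) l i t : 0 <= t -> st f t l i <= compl f t l i.
Proof.
elim: l t => [|u l IH] t ht //=. case: ifP => _; first by rewrite lerDl hf.
by apply: IH; rewrite addr_ge0 // hf.
Qed.

Lemma compl_mono (R : realFieldType) n (f : 'I_n -> R -> R)
  (hf : forall u t, 0 <= t -> 0 <= f u t)
  (hm : forall u t1 t2, 0 <= t1 -> t1 <= t2 -> t1 + f u t1 <= t2 + f u t2)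
  (P1 P2 : pred 'I_n) L i t1 t2 :
  0 <= t1 -> t1 <= t2 -> P1 i -> (forall u, P1 u -> P2 u) ->
  compl f t1 (filter P1 L) i <= compl f t2 (filter P2 L) i.
Proof.
move=> + + Pi hs.
elim: L t1 t2 => [|u L IH] t1 t2 h0 h12 //=.
case: (boolP (P1 u)) => p1.
  rewrite (hs _ p1) /=. case: eqP => _; first exact: hm.
  by apply: IH; [rewrite addr_ge0 // hf | exact: hm].
case: (boolP (P2 u)) => p2 /=; last exact: IH.
case: eqP => [e|_]; first by move: p1; rewrite e Pi.
apply: IH => //. apply: (le_trans h12). rewrite lerDl hf //. exact: le_trans h12.
Qed.

Lemma compl_eq (R : realFieldType) n (f : 'I_n -> R -> R)
  (P Q : pred 'I_n) L i t : P i ->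
  (forall u, (index u L <= index i L)%N -> P u = Q u) ->
  compl f t (filter P L) i = compl f t (filter Q L) i.
Proof.
move=> Pi. elim: L t => [|u L IH] t h //=.
have e : P u = Q u by apply: h => /=; rewrite eqxx.
rewrite -e. case: (eqVneq u i) => [->|ne].
  by rewrite Pi /= eqxx.
have h' : forall v, (index v L <= index i L)%N -> P v = Q v.
  move=> v hv. apply: h => /=. rewrite (negbTE ne).
  by case: (u == v).
case: (P u) => /=; last exact: IH.
rewrite (negbTE ne). exact: IH.
Qed.

Lemma compl_le_st (R : realFieldType) n (f : 'I_n -> R -> R)
  (hf : forall u t, 0 <= t -> 0 <= f u t) (P : pred 'I_n) L i x t :
  0 <= t -> P i -> (index i L < index x L)%N ->
  compl f t (filter P L) i <= st f t (filter P L) x.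
Proof.
move=> + Pi. elim: L t => [|u L IH] t h0 //=.
case: (eqVneq u i) => [->|ne].
  case: (eqVneq i x) => [->|nx]; first by rewrite ?eqxx ?ltnn.
  move=> _. rewrite Pi /= eqxx (negbTE nx). apply: st_ge => //.
  by rewrite addr_ge0 // hf.
case: (eqVneq u x) => [->|nx]; first by rewrite ?eqxx ?ltn0.
move=> hi. case: (P u) => /=; rewrite ?(negbTE ne) ?(negbTE nx); apply: IH => //.
by rewrite addr_ge0 // hf.
Qed.

Lemma st_le_st (R : realFieldType) n (f : 'I_n -> R -> R)
  (hf : forall u t, 0 <= t -> 0 <= f u t)
  (hm : forall u t1 t2, 0 <= t1 -> t1 <= t2 -> t1 + f u t1 <= t2 + f u t2)
  (P Q : pred 'I_n) L x i t1 t2 :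
  0 <= t1 -> t1 <= t2 -> P x -> Q i -> (index x L < index i L)%N ->
  (forall u, u != x -> P u -> Q u) ->
  st f t1 (filter P L) x <= st f t2 (filter Q L) i.
Proof.
move=> + + Px Qi + hs.
elim: L t1 t2 => [|u L IH] t1 t2 h0 h12 //=.
case: (eqVneq u x) => [->|nx].
  move=> _. rewrite Px /= ?eqxx. apply: (le_trans h12). apply: st_ge => //.
  exact: (le_trans h0 h12).
case: (eqVneq u i) => [->|ni]; first by rewrite ltn0.
move=> hi.
case: (boolP (P u)) => pu.
  rewrite (hs _ nx pu) /= (negbTE nx) (negbTE ni).
  by apply: IH; [rewrite addr_ge0 // hf | exact: hm | by []].
case: (boolP (Q u)) => qu /=; last exact: IH.
rewrite (negbTE ni). apply: IH => //. apply: (le_trans h12).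
rewrite lerDl hf //. exact: le_trans h12.
Qed.


Definition Lm {n} (pi1 pi2 : {perm 'I_n}) (m : bool) : seq 'I_n :=
  [seq ((prio2 pi1 pi2 m)^-1)%g k | k <- enum 'I_n].

Lemma index_Lm n (pi1 pi2 : {perm 'I_n}) m u :
  index u (Lm pi1 pi2 m) = prio2 pi1 pi2 m u.
Proof.
rewrite /Lm -{1}(permK (prio2 pi1 pi2 m) u) index_map; last exact: perm_inj.
by rewrite index_enum_ord.
Qed.

Lemma mem_Lm n (pi1 pi2 : {perm 'I_n}) m u : u \in Lm pi1 pi2 m.
Proof.
by rewrite /Lm -(permK (prio2 pi1 pi2 m) u) mem_map ?mem_enum //; exact: perm_inj.
Qed.

Lemma cost_def (R : realFieldType) n (s : R) (pi1 pi2 : {perm 'I_n}) p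
  (σ : 'I_n -> bool) i :
  cost (speed2 s) (prio2 pi1 pi2) p σ i =
  compl (fun u t => p u t / speed2 s (σ i)) 0
    [seq u <- Lm pi1 pi2 (σ i) | σ u == σ i] i.
Proof. by []. Qed.

Lemma cost_eq_before (R : realFieldType) n (s : R) (pi1 pi2 : {perm 'I_n}) p
  (σ σ' : 'I_n -> bool) u : σ u = σ' u ->
  (forall v, (prio2 pi1 pi2 (σ u) v <= prio2 pi1 pi2 (σ u) u)%N -> σ v = σ' v) ->
  cost (speed2 s) (prio2 pi1 pi2) p σ u = cost (speed2 s) (prio2 pi1 pi2) p σ' u.
Proof.
move=> hu h. rewrite !cost_def -hu. apply: compl_eq; first by rewrite eqxx.
move=> v; rewrite !index_Lm => hv. by rewrite h.
Qed.

Lemma cost_ext (R : realFieldType) n (s : R) (pi1 pi2 : {perm 'I_n}) p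
  (σ σ' : 'I_n -> bool) u : σ =1 σ' ->
  cost (speed2 s) (prio2 pi1 pi2) p σ u = cost (speed2 s) (prio2 pi1 pi2) p σ' u.
Proof. move=> h; apply: cost_eq_before => // v _; exact: h. Qed.

Lemma remove_M1 (R : realFieldType) n (s : R) (pi1 pi2 : {perm 'I_n}) p
  (hp0 : forall u t, 0 <= t -> 0 <= p u t)
  (hpm : forall u t1 t2, 0 <= t1 -> t1 <= t2 -> t1 + p u t1 <= t2 + p u t2)
  (σ σ' : 'I_n -> bool) u : σ' u = false ->
  (forall v, σ' v = false -> σ v = false) ->
  cost (speed2 s) (prio2 pi1 pi2) p σ' u <= cost (speed2 s) (prio2 pi1 pi2) p σ u.
Proof.
move=> hu h. rewrite !cost_def hu (h _ hu) /speed2.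
apply: compl_mono => //.
- by move=> v t ht; rewrite divr1 hp0.
- by move=> v t1 t2 h1 h2; rewrite !divr1 hpm.
- by rewrite hu.
- by move=> v /eqP /h ->.
Qed.

Definition Inv {R : realFieldType} {n} (s : R) (pi1 pi2 : {perm 'I_n}) (p : 'I_n -> R -> R)
  (m : nat) (σ : 'I_n -> bool) : Prop :=
  [/\ (forall u, (m <= pi2 u)%N -> σ u = false),
      (forall u, (pi2 u < m)%N -> σ u = false ->
         cost (speed2 s) (prio2 pi1 pi2) p σ u <=
         cost (speed2 s) (prio2 pi1 pi2) p (upd σ u true) u) &
      (forall u, (pi2 u < m)%N -> σ u = true ->
         cost (speed2 s) (prio2 pi1 pi2) p σ u <=
         cost (speed2 s) (prio2 pi1 pi2) p (upd σ u false) u)].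

Lemma step_inv (R : realFieldType) n (s : R) (pi1 pi2 : {perm 'I_n}) (p : 'I_n -> R -> R)
  (hs0 : 0 < s) (hs1 : s <= 1)
  (hp0 : forall u t, 0 <= t -> 0 <= p u t)
  (hpm : forall u t1 t2, 0 <= t1 -> t1 <= t2 -> t1 + p u t1 <= t2 + p u t2)
  (k : 'I_n) (σ : 'I_n -> bool) :
  Inv s pi1 pi2 p k σ -> Inv s pi1 pi2 p k.+1 (alg_step s pi1 pi2 p σ k).
Proof.
set C := cost (speed2 s) (prio2 pi1 pi2) p.
have hF0 : forall m u t, 0 <= t -> 0 <= p u t / speed2 s m.
  move=> m u t ht; apply: divr_ge0; first exact: hp0.
  by case: m => /=; [exact: ltW|].
case=> I0 I1 I2.
set x := (pi2^-1)%g k.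
have hx : pi2 x = k by rewrite /x permKV.
have sx : σ x = false by apply: I0; rewrite hx.
have ux : forall u, nat_of_ord (pi2 u) = nat_of_ord k -> u = x.
  by move=> u /val_inj h; apply: (@perm_inj _ pi2); rewrite hx.
have hlt : forall u, (pi2 u < k.+1)%N -> u != x -> (pi2 u < k)%N.
  move=> u; rewrite ltnS leq_eqVlt => /orP [/eqP /ux -> |//]; by rewrite eqxx.
rewrite /alg_step -/x. case: ifP => d; last first.
  split.
  - by move=> u hu; apply: I0; exact: ltnW.
  - move=> u hu su. case: (eqVneq u x) => [->|nux]; last exact: I1 (hlt _ hu nux) su.
    by rewrite leNgt d.
  - move=> u hu su. case: (eqVneq u x) => [ex|nux]; first by rewrite ex sx in su.
    exact: I2 (hlt _ hu nux) su.
set σ1 := upd σ x true.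
have s1x : σ1 x = true by rewrite /σ1 /upd eqxx.
have s1u : forall u, u != x -> σ1 u = σ u by move=> u /negbTE h; rewrite /σ1 /upd h.
have bef2 : forall u v, (pi2 u < k)%N -> (pi2 v <= pi2 u)%N -> v != x.
  move=> u v h1 h2; apply/eqP => e; move: h2; rewrite e hx => h2.
  by move: (leq_ltn_trans h2 h1); rewrite ltnn.
split.
- move=> u hu. have nux : u != x by apply/eqP => e; move: hu; rewrite e hx ltnn.
  rewrite s1u //; apply: I0; exact: ltnW.
- move=> u hu s1u0. case: (eqVneq u x) => [ex|nux]; first by rewrite ex s1x in s1u0.
  have hum := hlt _ hu nux.
  have su : σ u = false by rewrite -s1u.
  apply: (le_trans (@remove_M1 _ _ s pi1 pi2 p hp0 hpm σ σ1 u _ _)) => //.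
    by move=> v; case: (eqVneq v x) => [->|nvx]; [rewrite s1x | rewrite s1u].
  apply: (le_trans (I1 _ hum su)). rewrite le_eqVlt; apply/orP; left; apply/eqP.
  apply: cost_eq_before; first by rewrite /upd eqxx.
  rewrite /upd eqxx /= => v hv. case: (v == u) => //. rewrite s1u //.
  exact: bef2 hum hv.
- move=> u hu s1ut. case: (eqVneq u x) => [ex|nux].
    rewrite ex. rewrite [X in _ <= X](@cost_ext _ _ s pi1 pi2 p (upd σ1 x false) σ x); first exact: ltW d.
    move=> v; rewrite /upd; case: (eqVneq v x) => [->|nvx] //.
    exact: s1u.
  have hum := hlt _ hu nux.
  have su : σ u = true by rewrite -s1u.
  have e1 : C σ1 u = C σ u.
    apply: cost_eq_before; first by rewrite s1u.
    rewrite s1ut /= => v hv. rewrite s1u //. exact: bef2 hum hv.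
  have npi : nat_of_ord (pi1 u) != pi1 x.
    apply/eqP => /val_inj /perm_inj e; by rewrite e eqxx in nux.
  case: (ltngtP (pi1 u) (pi1 x)) => hux; last by rewrite hux eqxx in npi.
    move: e1; rewrite /C => ->. apply: (le_trans (I2 _ hum su)). rewrite le_eqVlt; apply/orP; left; apply/eqP.
    apply: cost_eq_before; first by rewrite /upd !eqxx.
    rewrite /upd eqxx /= => v hv. case: (eqVneq v u) => //= nvu. rewrite s1u //.
    apply/eqP => ev; move: hv; rewrite ev => hv.
    by move: (leq_ltn_trans hv hux); rewrite ltnn.
  have hF2 : forall v t, 0 <= t -> 0 <= p v t / speed2 s true by move=> *; exact: hF0.
  have hF1 : forall v t, 0 <= t -> 0 <= p v t / speed2 s false by move=> *; exact: hF0.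
  have hF1m : forall v t1 t2, 0 <= t1 -> t1 <= t2 ->
      t1 + p v t1 / speed2 s false <= t2 + p v t2 / speed2 s false.
    by move=> v t1 t2 h1 h2; rewrite /speed2 !divr1 hpm.
  have hA : C σ1 u <= st (fun v t => p v t / speed2 s true) 0
                [seq v <- Lm pi1 pi2 true | σ1 v == true] x.
    rewrite /C cost_def s1ut. apply: compl_le_st => //; first by rewrite s1ut.
    by rewrite !index_Lm /= hx.
  rewrite /C !cost_def -/σ1 s1x sx in d.
  rewrite !compl_st ?mem_filter ?eqxx ?s1x ?sx ?mem_Lm // in d.
  set T := st _ 0 _ x in d. set S := st _ 0 _ x in d.
  have T0 : 0 <= T by apply: st_ge.
  have S0 : 0 <= S by apply: st_ge.
  have hTS : T <= S.
    rewrite leNgt; apply/negP => hST. move: d; apply/negP; rewrite -leNgt.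
    apply: (le_trans (hF1m x _ _ S0 (ltW hST))).
    rewrite lerD2l /speed2 divr1 ler_pdivlMr //. apply: ler_piMr => //.
    by apply: hp0.
  have hupd : upd σ1 u false u = false by rewrite /upd eqxx.
  apply: (le_trans hA). apply: (le_trans hTS).
  rewrite cost_def hupd.
  apply: (le_trans _ (compl_ge_st _ _ _ hF1 _ _ _ (lexx 0))). rewrite /S.
  apply: st_le_st => //.
  - by rewrite sx.
  - by rewrite hupd.
  - by rewrite !index_Lm.
  - move=> v nvx; rewrite /upd; case: (v == u) => //. by rewrite s1u.
Qed.

Lemma alg_inv (R : realFieldType) n (s : R) (pi1 pi2 : {perm 'I_n}) (p : 'I_n -> R -> R)
  (hs0 : 0 < s) (hs1 : s <= 1)
  (hp0 : forall u t, 0 <= t -> 0 <= p u t)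
  (hpm : forall u t1 t2, 0 <= t1 -> t1 <= t2 -> t1 + p u t1 <= t2 + p u t2) m :
  (m <= n)%N ->
  Inv s pi1 pi2 p m (foldl (alg_step s pi1 pi2 p) (fun _ => false) (take m (enum 'I_n))).
Proof.
elim: m => [|m IH] hm.
  by rewrite take0 /=; split => // u; rewrite ltn0.
rewrite (take_nth (Ordinal hm)) ?size_enum_ord // foldl_rcons.
have -> : nth (Ordinal hm) (enum 'I_n) m = Ordinal hm.
  by apply: val_inj; rewrite /= nth_enum_ord.
have := @step_inv _ _ s pi1 pi2 p hs0 hs1 hp0 hpm (Ordinal hm) _ (IH (ltnW hm)).
by [].
Qed.

Theorem theorem2 (R : realFieldType) (n : nat) (s : R)
  (pi1 pi2 : {perm 'I_n}) (pos : bool) (a b tau : 'I_n -> R) :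
  (0 < n)%N ->
  0 < s -> s <= 1 ->
  (forall i, 0 <= a i) -> (forall i, 0 <= b i) -> (forall i, 0 < tau i) ->
  (~~ pos -> forall i, a i <= 1) ->
  is_NE (speed2 s) (prio2 pi1 pi2) (proc pos a b tau)
    (alg_result s pi1 pi2 (proc pos a b tau)).
Proof.
move=> hn hs0 hs1 ha hb htau hneg.
have hp0 : forall u t, 0 <= t -> 0 <= proc pos a b tau u t.
  move=> u t ht; rewrite /proc; case: ifP => _.
    by rewrite addr_ge0 // mulr_ge0.
  by rewrite le_max ltW.
have hpm : forall u t1 t2, 0 <= t1 -> t1 <= t2 ->
    t1 + proc pos a b tau u t1 <= t2 + proc pos a b tau u t2.
  move=> u t1 t2 h1 h2; rewrite /proc; case: ifP => hpos.
    have := ler_wpM2l (ha u) h2. lra.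
  have ha1 := hneg (negbT hpos) u. have ha0 := ha u.
  have hm : a u * (t2 - t1) <= t2 - t1 by rewrite ler_piMl // subr_ge0.
  rewrite !maxEle; case: ifP => /= e1; case: ifP => /= e2; nra.
have := @alg_inv _ _ s pi1 pi2 _ hs0 hs1 hp0 hpm _ (leqnn n).
rewrite take_oversize ?size_enum_ord // -/(alg_result _ _ _ _).
set σ := alg_result _ _ _ _.
case=> _ I1 I2 i m.
case: (eqVneq m (σ i)) => [->|ne].
  rewrite (@cost_ext _ _ s pi1 pi2 _ (upd σ i (σ i)) σ) //.
  by move=> v; rewrite /upd; case: (eqVneq v i) => [->|].
case: (boolP (σ i)) ne => si ne.
  have -> : m = false by case: m ne.
  exact: I2 (ltn_ord _) si.
have -> : m = true by case: m ne.
exact: I1 (ltn_ord _) (negbTE si).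
Qed.
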